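(* Let $(G,d)$ be a boundedly compact $p$-uniformly convex metric space with $p\in(1,\infty)$ and $c>0$, $f:G\to\mathbb{R}$ proper, lower semicontinuous and convex, and $\lambda>0$. Then $x_+=\mathrm{prox}^p_{f,\lambda}(x)$ if and only if $$\frac{4}{cp\lambda^{p-1}}\Delta^{(p,c)}(x_+,x,x_+,y)-\frac{2-c}{2p\lambda^{p-1}}d(x_+,y)^p\le f(y)-f(x_+)\qquad\forall y\in G.$$
   Context: $(G,d)$ is uniquely geodesic; $(1-\tau)x\oplus\tau y$ is the point on the geodesic from $x$ to $y$ at distance $\tau d(x,y)$ from $x$. $p$-uniform convexity with constant $c$: $d(z,(1-\tau)x\oplus\tau y)^p\le(1-\tau)d(z,x)^p+\tau d(z,y)^p-\frac c2\tau(1-\tau)d(x,y)^p$. $f$ convex: $f((1-\tau)x\oplus\tau y)\le(1-\tau)f(x)+\tau f(y)$. $\mathrm{prox}^p_{f,\lambda}(x)=\operatorname{argmin}_{y\in G}\{f(y)+\frac1{p\lambda^{p-1}}d(y,x)^p\}$. $\Delta^{(p,c)}(x,y,u,v)=\frac c4\big(d(x,v)^p+d(y,u)^p-d(x,u)^p-d(y,v)^p\big)$. *)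

(* Defs.v *)
From Stdlib Require Import Reals Lra.
Open Scope R_scope.

(* Real power with the convention 0^a = 0 (a > 0), as used for d(x,y)^p. *)
Definition rpow (x a : R) : R := if Rle_dec x 0 then 0 else Rpower x a.

Section Defs.
Variable G : Type.
Variable d : G -> G -> R.

Definition is_metric : Prop :=
  (forall x y, 0 <= d x y) /\
  (forall x y, d x y = 0 <-> x = y) /\
  (forall x y, d x y = d y x) /\
  (forall x y z, d x z <= d x y + d y z).

Definition is_geodesic (gamma : R -> G) (x y : G) : Prop :=
  gamma 0 = x /\ gamma 1 = y /\
  (forall s t, 0 <= s <= 1 -> 0 <= t <= 1 ->
     d (gamma s) (gamma t) = Rabs (s - t) * d x y).

(* geo x y tau = (1-tau) x (+) tau y : G is uniquely geodesic and geo
   parametrizes the unique geodesic from x to y. *)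
Definition uniquely_geodesic_with (geo : G -> G -> R -> G) : Prop :=
  forall x y, is_geodesic (geo x y) x y /\
    (forall gamma, is_geodesic gamma x y ->
       forall t, 0 <= t <= 1 -> gamma t = geo x y t).

Definition seq_converges (u : nat -> G) (l : G) : Prop :=
  forall eps, 0 < eps -> exists N, forall n, (N <= n)%nat -> d (u n) l < eps.

Definition closed_set (S : G -> Prop) : Prop :=
  forall u l, (forall n, S (u n)) -> seq_converges u l -> S l.

Definition bounded_set (S : G -> Prop) : Prop :=
  exists z r, forall x, S x -> d z x <= r.

(* sequential compactness (equivalent to compactness in metric spaces) *)
Definition compact_set (A : G -> Prop) : Prop :=
  forall u : nat -> G, (forall n, A (u n)) ->
    exists (phi : nat -> nat) l,
      (forall n, (phi n < phi (Datatypes.S n))%nat) /\ A l /\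
      seq_converges (fun n => u (phi n)) l.

Definition boundedly_compact : Prop :=
  forall A, closed_set A -> bounded_set A -> compact_set A.

Definition p_uniformly_convex (geo : G -> G -> R -> G) (p c : R) : Prop :=
  forall x y z tau, 0 <= tau <= 1 ->
    rpow (d z (geo x y tau)) p <=
      (1 - tau) * rpow (d z x) p + tau * rpow (d z y) p
      - c / 2 * tau * (1 - tau) * rpow (d x y) p.

Definition convex_fun (geo : G -> G -> R -> G) (f : G -> R) : Prop :=
  forall x y tau, 0 <= tau <= 1 ->
    f (geo x y tau) <= (1 - tau) * f x + tau * f y.

Definition lsc (f : G -> R) : Prop :=
  forall x eps, 0 < eps -> exists delta, 0 < delta /\
    forall y, d x y < delta -> f x - eps < f y.

(* "proper": for a real-valued f on G this only asks the effective domain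
   to be nonempty, i.e. G is nonempty. *)
Definition proper_fun (f : G -> R) : Prop := exists x : G, True.

Definition is_prox (f : G -> R) (p lambda : R) (x xp : G) : Prop :=
  forall y, f xp + / (p * rpow lambda (p - 1)) * rpow (d xp x) p
            <= f y + / (p * rpow lambda (p - 1)) * rpow (d y x) p.

Definition Delta_pc (p c : R) (x y u v : G) : R :=
  c / 4 * (rpow (d x v) p + rpow (d y u) p - rpow (d x u) p - rpow (d y v) p).

End Defs.

Arguments is_metric {G}. Arguments is_geodesic {G}. Arguments uniquely_geodesic_with {G}.
Arguments seq_converges {G}. Arguments closed_set {G}. Arguments bounded_set {G}.
Arguments compact_set {G}. Arguments boundedly_compact {G}. Arguments p_uniformly_convex {G}.
Arguments convex_fun {G}. Arguments lsc {G}. Arguments proper_fun {G}.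
Arguments is_prox {G}. Arguments Delta_pc {G}.

(* Main.v *)
Require Import Defs.
From Stdlib Require Import Reals Lra Psatz.
Open Scope R_scope.

Lemma small_t_lemma (M K : R) : 0 <= M ->
  (forall t, 0 < t <= 1 -> (1 - t) * M <= K) -> M <= K.
Proof.
  intros HM H.
  destruct (Rle_dec M K) as [h|h]; [exact h|].
  exfalso. apply Rnot_le_lt in h.
  destruct (Rle_dec (-M) K) as [h2|h2].
  - assert (HM0 : 0 < M) by lra.
    set (t := (M - K) / (2 * M)).
    assert (Ht : 0 < t <= 1).
    { unfold t; split.
      - apply Rdiv_lt_0_compat; lra.
      - apply Rmult_le_reg_r with (2*M); [lra|].
        unfold Rdiv; rewrite Rmult_assoc, Rinv_l; lra. }
    specialize (H t Ht).
    assert (E : (1 - t) * M = (M + K) / 2).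
    { unfold t; field; lra. }
    lra.
  - specialize (H 1 ltac:(lra)). lra.
Qed.

Theorem mainTheorem10 (G : Type) (d : G -> G -> R) (geo : G -> G -> R -> G)
  (p c lambda : R) (f : G -> R) (x xp : G) :
  is_metric d ->
  uniquely_geodesic_with d geo ->
  boundedly_compact d ->
  1 < p -> 0 < c ->
  p_uniformly_convex d geo p c ->
  proper_fun f -> lsc d f -> convex_fun geo f ->
  0 < lambda ->
  (is_prox d f p lambda x xp <->
   forall y : G,
     4 / (c * p * rpow lambda (p - 1)) * Delta_pc d p c xp x xp y
     - (2 - c) / (2 * p * rpow lambda (p - 1)) * rpow (d xp y) p
     <= f y - f xp).
Proof.
  intros [Hpos [Hzero [Hsym Htri]]] _ _ Hp Hc Huc _ _ Hcvx Hl.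
  assert (HL : 0 < rpow lambda (p - 1)).
  { unfold rpow. destruct (Rle_dec lambda 0); [lra|]. apply exp_pos. }
  set (L := rpow lambda (p - 1)) in *.
  assert (HA : 0 < / (p * L)) by (apply Rinv_0_lt_compat; nra).
  set (A := / (p * L)) in *.
  assert (D0 : rpow (d xp xp) p = 0).
  { assert (d xp xp = 0) by (apply Hzero; reflexivity).
    rewrite H; unfold rpow; destruct (Rle_dec 0 0); lra. }
  assert (Dge : forall a b, 0 <= rpow (d a b) p).
  { intros a b; unfold rpow; destruct (Rle_dec (d a b) 0); [lra|].
    left; apply exp_pos. }
  assert (Dsym : forall a b, rpow (d a b) p = rpow (d b a) p).
  { intros a b; rewrite Hsym; reflexivity. }
  assert (Eq : forall y,
     4 / (c * p * L) * Delta_pc d p c xp x xp y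
     - (2 - c) / (2 * p * L) * rpow (d xp y) p
     = A * (c / 2 * rpow (d xp y) p + rpow (d xp x) p - rpow (d y x) p)).
  { intros y. unfold Delta_pc, A. rewrite D0, (Dsym x xp), (Dsym x y).
    field. split; lra. }
  split.
  - intros Hprox y. rewrite Eq.
    set (M := A * (c / 2) * rpow (d xp y) p).
    set (K := f y - f xp + A * (rpow (d y x) p - rpow (d xp x) p)).
    assert (HM : 0 <= M).
    { unfold M. apply Rmult_le_pos; [|apply Dge]. nra. }
    assert (MK : M <= K).
    { apply small_t_lemma; [exact HM|].
      intros t Ht.
      specialize (Hprox (geo xp y t)).
      assert (Hf := Hcvx xp y t ltac:(lra)).
      assert (Hu := Huc xp y x t ltac:(lra)).
      rewrite (Dsym (geo xp y t) x) in Hprox.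
      rewrite (Dsym x xp), (Dsym x y) in Hu.
      assert (Hu' := Rmult_le_compat_l A _ _ (Rlt_le _ _ HA) Hu).
      assert (Hsum : 0 <= t * (K - (1 - t) * M)).
      { unfold K, M. unfold is_prox in Hprox; fold L A in Hprox. rewrite (Dsym x (geo xp y t)) in Hu'. nra. }
      destruct Ht as [Ht0 Ht1].
      assert (0 <= K - (1 - t) * M).
      { apply Rmult_le_reg_l with t; [exact Ht0|]. lra. }
      lra. }
    unfold M, K in MK. lra.
  - intros H. unfold is_prox. fold L A. intros y. specialize (H y). rewrite Eq in H.
    assert (0 <= A * (c/2) * rpow (d xp y) p).
    { apply Rmult_le_pos; [|apply Dge]. nra. }
    fold A. nra.
Qed.
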